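(* Let $G$ be a finite ordered graph and let $k$ be the largest integer such that $G$ contains the ordered matching $M_k$ as an (not necessarily induced) ordered subgraph, i.e. there are vertices $a_1<_G b_1<_G a_2<_G b_2<_G\dots<_G a_k<_G b_k$ with $\{a_i,b_i\}\in E(G)$ for all $i$. Then $\chi(G)\le 2k+1$.
   Context: An ordered graph is a triple $G=(V,E,\le_G)$ where $(V,E)$ is a finite simple undirected graph and $\le_G$ is a linear order on $V$. The ordered matching $M_k$ has vertices $a_1<b_1<\dots<a_k<b_k$ and edges $\{a_i,b_i\}$. The ordered chromatic number $\chi(G)$ is the minimum number of sets in a partition of $V$ into sets that are consecutive in $\le_G$ and span no edge of $G$. *)

(* Defs.v *)
From mathcomp Require Import all_boot.
Set Implicit Arguments. Unset Strict Implicit. Unset Printing Implicit Defensive.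

(* An ordered graph on n vertices: vertex set 'I_n with its natural linear
   order, and a symmetric irreflexive edge relation e. *)
Definition simple_graph (n : nat) (e : rel 'I_n) : Prop :=
  (forall u v, e u v = e v u) /\ (forall u, ~~ e u u).

Definition contains_matching (n : nat) (e : rel 'I_n) (k : nat) : Prop :=
  exists (a b : 'I_k -> 'I_n),
    (forall i, a i < b i /\ e (a i) (b i)) /\
    (forall i j : 'I_k, i < j -> b i < a j).

(* A partition of the vertices into at most m consecutive independent sets,
   encoded by a nondecreasing labelling c : V -> 'I_m whose classes are
   independent (classes of a monotone labelling are exactly intervals). *)
Definition ord_colorable (n : nat) (e : rel 'I_n) (m : nat) : bool :=
  [exists c : {ffun 'I_n -> 'I_m},
     [forall u : 'I_n, forall v : 'I_n, ((u <= v) ==> (c u <= c v)) && (e u v ==> (c u != c v))]].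

(* Ordered chromatic number: least m admitting such a partition
   (m = n always works for irreflexive e). *)
Definition ord_chi (n : nat) (e : rel 'I_n) : nat :=
  \big[minn/n]_(m < n.+1 | ord_colorable e m) m.

(* Main.v *)
Require Import Defs.
From mathcomp Require Import all_boot.
From mathcomp Require Import zify.
Set Implicit Arguments. Unset Strict Implicit.

Definition E (n' : nat) (e : rel 'I_n'.+1) (u v : nat) : bool :=
  e (inord u) (inord v).

Fixpoint hasM (n' : nat) (e : rel 'I_n'.+1) (s j : nat) : Prop :=
  match j with
  | 0 => True
  | j'.+1 => exists x y, [/\ s <= x, x < y, y < n'.+1, E e x y & hasM e y.+1 j']
  end.

Definition indep (n' : nat) (e : rel 'I_n'.+1) (s T : nat) : Prop :=
  forall u v, s <= u < T -> s <= v < T -> ~~ E e u v.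

Lemma split_lemma (n' : nat) (e : rel 'I_n'.+1)
  (Hsym : forall u v, e u v = e v u) (Hirr : forall u, ~~ e u u) (s : nat) :
  indep e s n'.+1 \/
  exists x t, [/\ s <= x, x < t, t < n'.+1, E e x t & indep e s t].
Proof.
pose P t := (s <= t < n'.+1) && has (fun x => E e x t) (iota s (t - s)).
have noedge : forall T, T <= n'.+1 -> (forall t, t < T -> ~~ P t) -> indep e s T.
  move=> T HT Hno u v Hu Hv; apply/negP => Huv.
  have Hgen : forall a b, s <= a < T -> s <= b < T -> a < b -> E e a b -> False.
    move=> a b Ha Hb Hab Eab.
    have := Hno b ltac:(lia); rewrite /P.
    have -> : s <= b < n'.+1 by lia.
    rewrite /=; move/hasPn => /(_ a); rewrite mem_iota.
    have -> : s <= a < s + (b - s) by lia.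
    by move=> /(_ isT); rewrite Eab.
  case: (ltngtP u v) => Hc.
  - exact: Hgen Hu Hv Hc Huv.
  - by apply: (Hgen v u Hv Hu Hc); rewrite /E Hsym.
  - by subst v; move: Huv; rewrite /E; move: (Hirr (inord u)) => /negP.
have [Hex|Hnex] : (exists t, P t) \/ (forall t, ~~ P t).
  case Hh: (has P (iota 0 n'.+1)).
    by move/hasP: Hh => [t _ Pt]; left; exists t.
  right=> t; apply/negP => Pt.
  move/hasPn: Hh => /(_ t); rewrite mem_iota.
  have: t < n'.+1 by move: Pt; rewrite /P => /andP [] /andP [] _.
  by move=> ->; rewrite Pt => /(_ isT).
- right; case: (ex_minnP Hex) => t Pt Hmin.
  move: (Pt); rewrite /P => /andP [/andP [Hst Htn] /hasP [x]].
  rewrite mem_iota => /andP [Hsx Hxt] Ext.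
  exists x, t; split => //; first by lia.
  apply: noedge; first lia.
  move=> t' Ht'; apply/negP => Pt'; have := Hmin t' Pt'; lia.
- left; apply: noedge => // t _; exact: Hnex.
Qed.

Lemma color_suffix (n' : nat) (e : rel 'I_n'.+1)
  (Hsym : forall u v, e u v = e v u) (Hirr : forall u, ~~ e u u) (j : nat) :
  forall s, s <= n'.+1 -> ~ hasM e s j.+1 ->
  exists f : nat -> nat,
    [/\ (forall u v, s <= u -> u <= v -> v < n'.+1 -> f u <= f v),
        (forall u v, s <= u < n'.+1 -> s <= v < n'.+1 -> E e u v -> f u != f v)
      & (forall u, f u < (2 * j).+1)].
Proof.
elim: j => [|j IH] s Hs Hno.
- case: (split_lemma Hsym Hirr s) => [Hind|[x [t [Hsx Hxt Htn Ext _]]]].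
    exists (fun _ => 0); split => // u v Hu Hv Euv.
    by have := Hind u v Hu Hv; rewrite Euv.
  by exfalso; apply: Hno; exists x, t.
- case: (split_lemma Hsym Hirr s) => [Hind|[x [t [Hsx Hxt Htn Ext Hind]]]].
    exists (fun _ => 0); split => // u v Hu Hv Euv.
    by have := Hind u v Hu Hv; rewrite Euv.
  have [g [Hg1 Hg2 Hg3]] : exists g : nat -> nat,
    [/\ (forall u v, t.+1 <= u -> u <= v -> v < n'.+1 -> g u <= g v),
        (forall u v, t.+1 <= u < n'.+1 -> t.+1 <= v < n'.+1 -> E e u v -> g u != g v)
      & (forall u, g u < (2 * j).+1)].
    apply: IH => //; move=> H; apply: Hno; exists x, t; split => //.
  exists (fun u => if u < t then 0 else if u == t then 1 else (g u).+2).
  split.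
  + move=> u v Hu Huv Hv.
    have [Hut|Hut] := ltnP u t; first by [].
    have [Hvt|Hvt] := ltnP v t; first lia.
    have [Hu'|Hu'] := eqVneq u t; have [Hv'|Hv'] := eqVneq v t => //; try lia.
    rewrite !ltnS; apply: Hg1 => //; lia.
  + move=> u v Hu Hv Euv.
    have [Hut|Hut] := ltnP u t; have [Hvt|Hvt] := ltnP v t.
    * by have := Hind u v ltac:(lia) ltac:(lia); rewrite Euv.
    * by case: (v == t).
    * by case: (u == t).
    * have [Hu'|Hu'] := eqVneq u t; have [Hv'|Hv'] := eqVneq v t => //.
      -- subst; by move: Euv; rewrite /E; move: (Hirr (inord t)) => /negP.
      -- rewrite eqSS; apply: Hg2 => //; lia.
  + move=> u; case: ifP => _; first by [].
    case: ifP => _; first by [].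
    have := Hg3 u; lia.
Qed.

Lemma hasM_seq (n' : nat) (e : rel 'I_n'.+1) (j : nat) : forall s, hasM e s j ->
  exists a b : nat -> nat,
    (forall i, i < j -> [/\ s <= a i, a i < b i, b i < n'.+1 & E e (a i) (b i)]) /\
    (forall i i', i < i' -> i' < j -> b i < a i').
Proof.
elim: j => [|j IH] s /=.
  by move=> _; exists (fun _ => 0), (fun _ => 0); split => // i; rewrite ltn0.
move=> [x [y [Hsx Hxy Hyn Exy Hrest]]].
have [a [b [Hab Hord]]] := IH _ Hrest.
exists (fun i => if i is i'.+1 then a i' else x), (fun i => if i is i'.+1 then b i' else y).
split.
- case=> [|i] Hi //=.
  have [H1 H2 H3 H4] := Hab i Hi; split => //; lia.
- case=> [|i] [|i'] //= Hii Hi'.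
  + have [H1 _ _ _] := Hab i' Hi'; lia.
  + exact: Hord.
Qed.

Lemma ord_chi_le_n (n : nat) (e : rel 'I_n) : ord_chi e <= n.
Proof.
rewrite /ord_chi; apply: (big_ind (fun x => x <= n)) => //.
  by move=> x y Hx Hy; rewrite geq_min Hx.
by move=> i _; rewrite -ltnS.
Qed.

Lemma bigmin_le (I : eqType) (r : seq I) (P : pred I) (F : I -> nat) x i0 :
  i0 \in r -> P i0 -> \big[minn/x]_(i <- r | P i) F i <= F i0.
Proof.
elim: r => // a r IH; rewrite in_cons big_cons => /orP [/eqP <-|H] Pi.
  by rewrite Pi geq_minl.
case: ifP => _; last exact: IH.
by rewrite geq_min IH ?orbT.
Qed.

Lemma ord_chi_le_m (n : nat) (e : rel 'I_n) (m : nat) :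
  m <= n -> ord_colorable e m -> ord_chi e <= m.
Proof.
move=> Hm Hc; rewrite /ord_chi.
have Hm' : m < n.+1 by [].
exact: (@bigmin_le _ (index_enum 'I_n.+1) (fun m => ord_colorable e m) (fun i : 'I_n.+1 => nat_of_ord i) n (Ordinal Hm') (mem_index_enum _) Hc).
Qed.

Theorem theorem2 (n : nat) (e : rel 'I_n) (k : nat) :
  simple_graph e ->
  contains_matching e k ->
  (forall j, contains_matching e j -> j <= k) ->
  ord_chi e <= 2 * k + 1.
Proof.
move=> [Hsym Hirr] _ Hmax.
case: (leqP n (2 * k + 1)) => Hn.
  exact: leq_trans (ord_chi_le_n e) Hn.
apply: ord_chi_le_m; first exact: ltnW.
case: n e Hsym Hirr Hmax Hn => [|n'] e Hsym Hirr Hmax Hn; first by [].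
have Hno : ~ hasM e 0 k.+1.
  move=> /hasM_seq [a [b [Hab Hord]]].
  suff : contains_matching e k.+1 by move/Hmax; rewrite ltnn.
  exists (fun i => inord (a i)), (fun i => inord (b i)); split.
  - move=> i; have [H1 H2 H3 H4] := Hab i (ltn_ord i).
    rewrite /E in H4; split => //.
    by rewrite !inordK //; lia.
  - move=> i i' Hii'; have [H1 H2 H3 H4] := Hab i (ltn_ord i).
    have [H1' H2' H3' H4'] := Hab i' (ltn_ord i').
    rewrite !inordK //; try lia; exact: Hord Hii' (ltn_ord i').
have [f [Hf1 Hf2 Hf3]] := color_suffix Hsym Hirr (s := 0) (leq0n _) Hno.
rewrite addn1 /ord_colorable.
apply/existsP; exists [ffun u : 'I_n'.+1 => (inord (f u) : 'I_(2 * k).+1)].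
apply/forallP => u; apply/forallP => v; rewrite !ffunE.
apply/andP; split; apply/implyP => H.
- rewrite !inordK //; apply: Hf1 => //.
- apply/negP => /eqP /(congr1 val) /=; rewrite !inordK // => Heq.
  have H1 : E e u v by rewrite /E !inord_val.
  by have := Hf2 (val u) (val v) (ltn_ord u) (ltn_ord v) H1; rewrite Heq eqxx.
Qed.
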